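(* For every integer $r\geq 0$, $$t(\underbrace{2,2,\ldots,2}_{r},3)=\sum_{k=1}^{r+1}(-1)^{k+1}\,d_{r,0}^k\,\frac{1}{2^{2k}}\,\zeta(2k+1)\,t(\underbrace{2,2,\ldots,2}_{r+1-k}),$$ where $d_{r,0}^k=\binom{2k}{2r+1}+\left(1-\frac{1}{2^{2k}}\right)2k$.
   Context: For positive integers $k_1,\ldots,k_m$ with $k_m>1$, the multiple $t$-value is $t(k_1,\ldots,k_m)=\sum_{1\leq n_1<n_2<\cdots<n_m}\frac{1}{(2n_1-1)^{k_1}\cdots(2n_m-1)^{k_m}}$; the empty $t$-value ($m=0$) is $1$. $\zeta$ is the Riemann zeta function. Binomial coefficients $\binom{a}{b}$ with $b>a$ are $0$. *)

(* Defs.v *)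
From Stdlib Require Import Reals List.
From Coquelicot Require Import Coquelicot.
Open Scope R_scope.

Fixpoint rsum (f : nat -> R) (lo cnt : nat) : R :=
  match cnt with
  | O => 0
  | S c => f lo + rsum f (S lo) c
  end.

Fixpoint binom (a b : nat) : nat :=
  match a, b with
  | _, O => 1
  | O, S _ => 0
  | S a', S b' => binom a' b' + binom a' (S b')
  end.

(* tpart ks a N = sum over a < n_1 < n_2 < ... < n_m <= N of
   1 / ((2n_1-1)^{k_1} ... (2n_m-1)^{k_m}),  ks = [k_1; ...; k_m]. *)
Fixpoint tpart (ks : list nat) (a N : nat) : R :=
  match ks with
  | nil => 1
  | k :: ks' =>
      rsum (fun n => / (INR (2 * n - 1)) ^ k * tpart ks' n N) (S a) (N - a)
  end.

Definition mtv (ks : list nat) : R := real (Lim_seq (fun N => tpart ks 0 N)).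

Definition zeta (s : nat) : R :=
  real (Lim_seq (fun N => rsum (fun n => / (INR n) ^ s) 1 N)).

Definition d_r0 (r k : nat) : R :=
  INR (binom (2 * k) (2 * r + 1)) + (1 - / 2 ^ (2 * k)) * INR (2 * k).

(* Main.v *)
Require Import Defs.
From Stdlib Require Import Reals List.
From Stdlib Require Import Lra Lia Arith.
From Coquelicot Require Import Coquelicot.
Open Scope R_scope.

Lemma rsum_ext f g lo c :
  (forall k, (lo <= k < lo + c)%nat -> f k = g k) -> rsum f lo c = rsum g lo c.
Proof.
  revert lo; induction c as [|c IH]; intros lo H; simpl; [reflexivity|].
  rewrite (H lo) by lia. rewrite (IH (S lo)); [reflexivity|].
  intros k Hk; apply H; lia.
Qed.

Lemma rsum_last f lo c : rsum f lo (S c) = rsum f lo c + f (lo + c)%nat.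
Proof.
  revert lo; induction c as [|c IH]; intros lo.
  - simpl. rewrite Nat.add_0_r. ring.
  - change (rsum f lo (S (S c))) with (f lo + rsum f (S lo) (S c)).
    rewrite IH. simpl. replace (S (lo + c)) with (lo + S c)%nat by lia. ring.
Qed.

Lemma rsum_plus f g lo c :
  rsum (fun k => f k + g k) lo c = rsum f lo c + rsum g lo c.
Proof. revert lo; induction c; intros; simpl; [ring|rewrite IHc; ring]. Qed.

Lemma rsum_scal a f lo c : rsum (fun k => a * f k) lo c = a * rsum f lo c.
Proof. revert lo; induction c; intros; simpl; [ring|rewrite IHc; ring]. Qed.

Lemma rsum_minus f g lo c :
  rsum (fun k => f k - g k) lo c = rsum f lo c - rsum g lo c.
Proof. revert lo; induction c; intros; simpl; [ring|rewrite IHc; ring]. Qed.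

Lemma rsum_zero lo c : rsum (fun _ => 0) lo c = 0.
Proof. revert lo; induction c; intros; simpl; [ring|rewrite IHc; ring]. Qed.

Lemma rsum_shift f lo c : rsum f (S lo) c = rsum (fun k => f (S k)) lo c.
Proof. revert lo; induction c; intros; simpl; [ring|rewrite IHc; ring]. Qed.

Lemma rsum_split f lo a b : rsum f lo (a + b) = rsum f lo a + rsum f (lo + a) b.
Proof.
  revert lo; induction a; intros lo; simpl.
  - rewrite Nat.add_0_r; ring.
  - rewrite IHa. replace (S lo + a)%nat with (lo + S a)%nat by lia. ring.
Qed.

Lemma rsum_swap (F : nat -> nat -> R) a K b M :
  rsum (fun n => rsum (fun k => F k n) a K) b M =
  rsum (fun k => rsum (fun n => F k n) b M) a K.
Proof.
  revert b; induction M; intros b; simpl.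
  - rewrite rsum_zero; ring.
  - rewrite IHM. rewrite <- rsum_plus. apply rsum_ext. intros; simpl; ring.
Qed.

Lemma rsum_le f g lo c : (forall k, f k <= g k) -> rsum f lo c <= rsum g lo c.
Proof. intros H; revert lo; induction c; intros; simpl; [lra|]. specialize (IHc (S lo)); specialize (H lo); lra. Qed.

Lemma rsum_abs f lo c : Rabs (rsum f lo c) <= rsum (fun k => Rabs (f k)) lo c.
Proof.
  revert lo; induction c; intros; simpl.
  - rewrite Rabs_R0; lra.
  - eapply Rle_trans; [apply Rabs_triang|]. specialize (IHc (S lo)); lra.
Qed.

Lemma tpart_nonempty_0 ks k a N : (N <= a)%nat -> tpart (k :: ks) a N = 0.
Proof. intros H; simpl. replace (N - a)%nat with 0%nat by lia. reflexivity. Qed.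

Lemma tpart_snoc ks k a N : (a <= N)%nat ->
  tpart (ks ++ k :: nil) a (S N) =
  tpart (ks ++ k :: nil) a N + / INR (2 * S N - 1) ^ k * tpart ks a N.
Proof.
  revert a; induction ks as [|k' ks IH]; intros a Ha.
  - cbn [tpart app]. replace (S N - a)%nat with (S (N - a)) by lia.
    rewrite rsum_last. replace (S a + (N - a))%nat with (S N) by lia. ring.
  - change ((k' :: ks) ++ k :: nil) with (k' :: (ks ++ k :: nil)).
    cbn [tpart]. replace (S N - a)%nat with (S (N - a)) by lia.
    rewrite rsum_last. replace (S a + (N - a))%nat with (S N) by lia.
    destruct ks as [|k2 ks2].
    + simpl app. rewrite (tpart_nonempty_0 nil k (S N) (S N)) by lia.
      rewrite Rmult_0_r, Rplus_0_r.
      rewrite (rsum_ext _ (fun n => / INR (2 * n - 1) ^ k' * tpart (k :: nil) n N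
                                    + / INR (2 * S N - 1) ^ k * (/ INR (2 * n - 1) ^ k' * tpart nil n N))).
      * rewrite rsum_plus, rsum_scal. reflexivity.
      * intros n Hn. rewrite IH by lia. cbn [app]. change (tpart nil n N) with 1. ring.
    + change ((k2 :: ks2) ++ k :: nil) with (k2 :: (ks2 ++ k :: nil)).
      rewrite (tpart_nonempty_0 (ks2 ++ k :: nil) k2 (S N) (S N)) by lia.
      rewrite Rmult_0_r, Rplus_0_r.
      rewrite (rsum_ext _ (fun n => / INR (2 * n - 1) ^ k' * tpart (k2 :: ks2 ++ k :: nil) n N
                                    + / INR (2 * S N - 1) ^ k * (/ INR (2 * n - 1) ^ k' * tpart (k2 :: ks2) n N))).
      * rewrite rsum_plus, rsum_scal. reflexivity.
      * intros n Hn. change (k2 :: ks2 ++ k :: nil) with ((k2 :: ks2) ++ k :: nil).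
        rewrite IH by lia. ring.
Qed.

Lemma INR_odd N : INR (2 * S N - 1) = 2 * INR N + 1.
Proof. replace (2 * S N - 1)%nat with (S (2 * N)) by lia. rewrite S_INR, mult_INR. simpl. ring. Qed.

Definition uu (i : nat) : R := 2 * INR i + 1.
Definition ee (j N : nat) : R := tpart (repeat 2%nat j) 0 N.
Definition TT (r N : nat) : R := tpart (repeat 2%nat r ++ 3%nat :: nil) 0 N.

Lemma ee_0 N : ee 0 N = 1.
Proof. reflexivity. Qed.
Lemma ee_S0 j : ee (S j) 0 = 0.
Proof. unfold ee. simpl. reflexivity. Qed.
Lemma ee_SS j N : ee (S j) (S N) = ee (S j) N + / uu N ^ 2 * ee j N.
Proof.
  unfold ee. change (repeat 2%nat (S j)) with (2%nat :: repeat 2%nat j).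
  rewrite repeat_cons. rewrite tpart_snoc by lia. rewrite INR_odd. reflexivity.
Qed.

Lemma TT_0 r : TT r 0 = 0.
Proof. unfold TT. destruct r; reflexivity. Qed.

Lemma TT_S r N : TT r (S N) = TT r N + / uu N ^ 3 * ee r N.
Proof. unfold TT, ee. rewrite tpart_snoc by lia. rewrite INR_odd. reflexivity. Qed.

Lemma uu_pos i : 0 < uu i.
Proof. unfold uu. pose proof (pos_INR i). lra. Qed.

Lemma ee_nonneg j N : 0 <= ee j N.
Proof.
  revert j; induction N; intros [|j]; try (rewrite ee_0; lra).
  - rewrite ee_S0; lra.
  - rewrite ee_SS. pose proof (IHN (S j)); pose proof (IHN j).
    pose proof (uu_pos N). assert (0 < / uu N ^ 2) by (apply Rinv_0_lt_compat; apply pow_lt; lra).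
    nra.
Qed.

Lemma ee_incr j N : ee j N <= ee j (S N).
Proof.
  destruct j. rewrite !ee_0; lra.
  rewrite ee_SS. pose proof (ee_nonneg j N).
  pose proof (uu_pos N). assert (0 < / uu N ^ 2) by (apply Rinv_0_lt_compat; apply pow_lt; lra).
  nra.
Qed.

Fixpoint ss (N : nat) : R := match N with O => 0 | S N' => ss N' + / uu N' ^ 2 end.

Lemma ss_bound N : ss N <= 2 - 2 / (INR N + 1).
Proof.
  induction N.
  - simpl. lra.
  - change (ss (S N)) with (ss N + / uu N ^ 2). rewrite S_INR. unfold uu. pose proof (pos_INR N).
    assert (/ (2 * INR N + 1) ^ 2 <= 2 / (INR N + 1) - 2 / (INR N + 1 + 1)).
    { apply Rle_trans with (2 / ((INR N + 1) * (INR N + 2))).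
      - apply Rle_trans with (/ ((INR N + 1) * (INR N + 2) / 2)).
        + apply Rinv_le_contravar.
          * apply Rdiv_lt_0_compat; [apply Rmult_lt_0_compat|]; lra.
          * nra.
        + right. field. lra.
      - right. field. lra. }
    lra.
Qed.

Lemma ss_nonneg N : 0 <= ss N.
Proof. induction N; [simpl; lra|]. change (ss (S N)) with (ss N + / uu N ^ 2). pose proof (uu_pos N). assert (0 < / uu N ^ 2) by (apply Rinv_0_lt_compat; apply pow_lt; lra). lra. Qed.

Lemma ee_step_bound j N : ee (S j) N <= ss N * ee j N.
Proof.
  revert j; induction N; intros j.
  - rewrite ee_S0. simpl. lra.
  - rewrite ee_SS. change (ss (S N)) with (ss N + / uu N ^ 2).
    pose proof (IHN j). pose proof (ee_incr j N). pose proof (ss_nonneg N).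
    pose proof (ee_nonneg j N).
    pose proof (uu_pos N). assert (0 < / uu N ^ 2) by (apply Rinv_0_lt_compat; apply pow_lt; lra).
    nra.
Qed.

Lemma ee_bound j N : ee j N <= 2 ^ j.
Proof.
  assert (Hs : ss N <= 2) by (pose proof (ss_bound N); pose proof (pos_INR N);
     assert (0 <= 2 / (INR N + 1)) by (apply Rdiv_le_0_compat; lra); lra).
  induction j.
  - rewrite ee_0; simpl; lra.
  - pose proof (ee_step_bound j N). pose proof (ss_nonneg N). pose proof (ee_nonneg j N).
    simpl. nra.
Qed.

Lemma ee_lim j : is_lim_seq (ee j) (mtv (repeat 2%nat j)).
Proof.
  unfold mtv. fold (ee j).
  assert (H : ex_finite_lim_seq (ee j)).
  { apply ex_finite_lim_seq_incr with (M := 2 ^ j). apply ee_incr. apply ee_bound. }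
  pose proof (Lim_seq_correct' _ H) as H1. exact H1.
Qed.

Lemma lim_rsum (F : nat -> nat -> R) (l : nat -> R) lo c :
  (forall k, (lo <= k < lo + c)%nat -> is_lim_seq (fun N => F N k) (l k)) ->
  is_lim_seq (fun N => rsum (F N) lo c) (rsum l lo c).
Proof.
  revert lo; induction c; intros lo H; simpl.
  - apply is_lim_seq_const.
  - apply is_lim_seq_plus'. apply H; lia. apply IHc. intros; apply H; lia.
Qed.

Definition ser (f : nat -> R) : R := real (Lim_seq (fun K => rsum f 1 K)).

Lemma lim_real_eq u (l : R) : is_lim_seq u l -> real (Lim_seq u) = l.
Proof. intros H. rewrite (is_lim_seq_unique _ _ H). reflexivity. Qed.

Lemma ps_le_lim w (W : R) : (forall n, 0 <= w n) -> is_lim_seq (fun K => rsum w 1 K) W ->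
  forall K, rsum w 1 K <= W.
Proof.
  intros Hw HW K. apply (is_lim_seq_incr_compare (fun K => rsum w 1 K) W HW).
  intros n. rewrite rsum_last. specialize (Hw (1 + n)%nat). lra.
Qed.

Lemma ser_dom f w (W : R) : (forall n, Rabs (f n) <= w n) ->
  is_lim_seq (fun K => rsum w 1 K) W -> is_lim_seq (fun K => rsum f 1 K) (ser f).
Proof.
  intros Hf HW.
  assert (Hw : forall n, 0 <= w n) by (intros n; eapply Rle_trans; [apply Rabs_pos|apply Hf]).
  set (g := fun n => f n + w n).
  assert (Hinc : forall K, rsum g 1 K <= rsum g 1 (S K)).
  { intros K. rewrite rsum_last. unfold g. specialize (Hf (1+K)%nat).
    apply Rabs_le_between in Hf. lra. }
  assert (Hb : forall K, rsum g 1 K <= 2 * W).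
  { intros K. unfold g. rewrite rsum_plus. pose proof (ps_le_lim w W Hw HW K).
    pose proof (rsum_abs f 1 K). pose proof (rsum_le (fun k => Rabs (f k)) w 1 K Hf).
    apply Rabs_le_between in H0. lra. }
  assert (Hex : ex_finite_lim_seq (fun K => rsum g 1 K)).
  { apply ex_finite_lim_seq_incr with (M := 2 * W); assumption. }
  destruct Hex as [Lg HLg].
  assert (H : is_lim_seq (fun K => rsum f 1 K) (Lg - W)).
  { eapply is_lim_seq_ext; [|apply (is_lim_seq_minus' _ _ _ _ HLg HW)].
    intros K. unfold g. rewrite rsum_plus. ring. }
  unfold ser. rewrite (lim_real_eq _ _ H). exact H.
Qed.

Lemma ser_tail h w (W : R) : (forall n, Rabs (h n) <= w n) ->
  is_lim_seq (fun K => rsum w 1 K) W ->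
  forall K, Rabs (ser h - rsum h 1 K) <= W - rsum w 1 K.
Proof.
  intros Hh HW K.
  assert (Hw : forall n, 0 <= w n) by (intros n; eapply Rle_trans; [apply Rabs_pos|apply Hh]).
  pose proof (ser_dom h w W Hh HW) as Hs.
  assert (H1 : is_lim_seq (fun M => Rabs (rsum h 1 (M + K) - rsum h 1 K)) (Rabs (ser h - rsum h 1 K))).
  { apply (is_lim_seq_abs _ (ser h - rsum h 1 K)).
    apply is_lim_seq_minus'; [|apply is_lim_seq_const].
    apply (is_lim_seq_incr_n (fun M => rsum h 1 M) K). exact Hs. }
  assert (H2 : forall M, Rabs (rsum h 1 (M + K) - rsum h 1 K) <= W - rsum w 1 K).
  { intros M. rewrite Nat.add_comm, rsum_split.
    replace (rsum h 1 K + rsum h (1 + K) M - rsum h 1 K) with (rsum h (1 + K) M) by ring.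
    eapply Rle_trans; [apply rsum_abs|]. eapply Rle_trans; [apply (rsum_le _ w); exact Hh|].
    pose proof (ps_le_lim w W Hw HW (K + M)). rewrite rsum_split in H. lra. }
  pose proof (is_lim_seq_le _ _ _ _ H2 H1 (is_lim_seq_const (W - rsum w 1 K))) as H3.
  simpl in H3. exact H3.
Qed.

Lemma dct (f : nat -> nat -> R) (g w : nat -> R) (W : R) :
  (forall N n, Rabs (f N n) <= w n) ->
  is_lim_seq (fun K => rsum w 1 K) W ->
  (forall n, is_lim_seq (fun N => f N n) (g n)) ->
  is_lim_seq (fun N => ser (f N)) (ser g).
Proof.
  intros Hf HW Hg.
  assert (Hgw : forall n, Rabs (g n) <= w n).
  { intros n. pose proof (is_lim_seq_abs _ _ (Hg n)) as H.
    pose proof (is_lim_seq_le _ _ _ _ (fun N => Hf N n) H (is_lim_seq_const (w n))). simpl in H0. exact H0. }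
  apply is_lim_seq_Reals. intros eps Heps.
  pose proof (proj1 (is_lim_seq_Reals _ _) HW (eps/3)) as [K HK]; [lra|].
  specialize (HK K (le_n K)). unfold R_dist in HK.
  assert (Hfin : is_lim_seq (fun N => rsum (f N) 1 K) (rsum g 1 K)).
  { apply lim_rsum. intros; apply Hg. }
  pose proof (proj1 (is_lim_seq_Reals _ _) Hfin (eps/3)) as [N1 HN1]; [lra|].
  exists N1. intros N HN. specialize (HN1 N HN). unfold R_dist in *.
  pose proof (ser_tail (f N) w W (Hf N) HW K).
  pose proof (ser_tail g w W Hgw HW K).
  apply Rabs_lt_between in HK.
  replace (ser (f N) - ser g) with ((ser (f N) - rsum (f N) 1 K) + (rsum (f N) 1 K - rsum g 1 K) - (ser g - rsum g 1 K)) by ring.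
  eapply Rle_lt_trans; [apply Rabs_triang|].
  rewrite Rabs_Ropp. eapply Rle_lt_trans. apply Rplus_le_compat_r. apply Rabs_triang.
  lra.
Qed.

Definition yy (n : nat) : R := 2 * INR n.

Fixpoint Rf (m n : nat) : R :=
  match m with O => 1 | S m' => Rf m' n * (uu m' ^ 2 / (uu m' ^ 2 - yy n ^ 2)) end.
Fixpoint Sf (m n : nat) : R :=
  match m with O => 0 | S m' => Sf m' n + 2 * yy n / (uu m' ^ 2 - yy n ^ 2) end.
Definition rho m n := Rf m n * Sf m n.

Lemma parity a b : 2 * INR a + 1 <> 2 * INR b.
Proof.
  intros H. assert (H0 : INR (2 * a + 1) = INR (2 * b)).
  { rewrite plus_INR, !mult_INR. simpl. lra. }
  apply INR_eq in H0. lia.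
Qed.

Lemma den_nz m n : uu m ^ 2 - yy n ^ 2 <> 0.
Proof.
  unfold uu, yy. pose proof (parity m n). pose proof (pos_INR m). pose proof (pos_INR n).
  replace ((2 * INR m + 1) ^ 2 - (2 * INR n) ^ 2) with
    ((2 * INR m + 1 - 2 * INR n) * (2 * INR m + 1 + 2 * INR n)) by ring.
  apply Rmult_integral_contrapositive; split; lra.
Qed.

Lemma odd_nz n m : yy n - 2 * INR m + 1 <> 0.
Proof. unfold yy. pose proof (parity n m). lra. Qed.

Lemma pos_den n m : 0 < yy n + 2 * INR m + 1.
Proof. unfold yy. pose proof (pos_INR n). pose proof (pos_INR m). lra. Qed.

Lemma yy_S n : yy (S n) = yy n + 2.
Proof. unfold yy. rewrite S_INR. ring. Qed.

Lemma Rf_n0 m : Rf m 0 = 1.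
Proof.
  induction m; simpl; [reflexivity|]. rewrite IHm. unfold yy. simpl.
  pose proof (uu_pos m). field. lra.
Qed.

Lemma Sf_n0 m : Sf m 0 = 0.
Proof. induction m; simpl; [reflexivity|]. rewrite IHm. unfold yy. simpl. lra. Qed.

Lemma Rf_rec m n :
  Rf m (S n) = Rf m n * (yy n - 2 * INR m + 1) / (yy n + 2 * INR m + 1).
Proof.
  induction m.
  - simpl. pose proof (pos_den n 0). simpl in H. field. lra.
  - cbn [Rf]. rewrite IHm. rewrite yy_S.
    pose proof (den_nz m n) as D1. pose proof (den_nz m (S n)) as D2. rewrite yy_S in D2.
    pose proof (pos_den n m) as P1. pose proof (pos_den n (S m)) as P2.
    pose proof (odd_nz n m). pose proof (odd_nz n (S m)).
    rewrite S_INR in *. unfold uu in *.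
    field. repeat split; lra.
Qed.

Lemma Sf_rec m n :
  Sf m (S n) = Sf m n + 4 * INR m / ((yy n - 2 * INR m + 1) * (yy n + 2 * INR m + 1)).
Proof.
  induction m.
  - simpl. pose proof (pos_den n 0). simpl in H. field. lra.
  - cbn [Sf]. rewrite IHm. rewrite yy_S.
    pose proof (den_nz m n) as D1. pose proof (den_nz m (S n)) as D2. rewrite yy_S in D2.
    pose proof (pos_den n m) as P1. pose proof (pos_den n (S m)) as P2.
    pose proof (odd_nz n m). pose proof (odd_nz n (S m)).
    rewrite S_INR in *. unfold uu in *.
    field. repeat split; lra.
Qed.

Lemma lim_invx : is_lim_seq (fun n => / INR (S n)) 0.
Proof.
  apply (is_lim_seq_incr_1 (fun n => / INR n)).
  replace (Finite 0) with (Rbar_inv p_infty) by reflexivity.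
  apply is_lim_seq_inv. apply is_lim_seq_INR. discriminate.
Qed.

Lemma div_scale x A B : x <> 0 -> (x * A) / (x * B) = A / B.
Proof.
  intros Hx. destruct (Req_dec B 0) as [HB|HB].
  - subst. rewrite Rmult_0_r. unfold Rdiv. rewrite Rinv_0. ring.
  - field. auto.
Qed.

Lemma rat2 p q c d e : c <> 0 ->
  is_lim_seq (fun n => (p * INR n + q) / (c * INR n ^ 2 + d * INR n + e)) 0.
Proof.
  intros Hc. apply is_lim_seq_incr_1.
  apply is_lim_seq_ext with
    (fun n => (p * / INR (S n) + q * (/ INR (S n) * / INR (S n))) / (c + d * / INR (S n) + e * (/ INR (S n) * / INR (S n)))).
  - intros n. assert (Hx : 0 < INR (S n)) by (apply lt_0_INR; lia).
    rewrite <- (div_scale (INR (S n) ^ 2)) by (apply pow_nonzero; lra).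
    f_equal; field; lra.
  - replace 0 with (0 / c) by (field; auto).
    apply is_lim_seq_div'; [| |exact Hc].
    + replace 0 with (p * 0 + q * (0 * 0)) by ring.
      apply is_lim_seq_plus'. apply is_lim_seq_mult'. apply is_lim_seq_const. apply lim_invx.
      apply is_lim_seq_mult'. apply is_lim_seq_const. apply is_lim_seq_mult'; apply lim_invx.
    + assert (Hd : is_lim_seq (fun n => c + d * / INR (S n) + e * (/ INR (S n) * / INR (S n))) (c + d * 0 + e * (0 * 0))).
      { apply is_lim_seq_plus'. apply is_lim_seq_plus'. apply is_lim_seq_const.
        apply is_lim_seq_mult'. apply is_lim_seq_const. apply lim_invx.
        apply is_lim_seq_mult'. apply is_lim_seq_const. apply is_lim_seq_mult'; apply lim_invx. }
      replace (c + d * 0 + e * (0 * 0)) with c in Hd by ring. exact Hd.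
Qed.

Lemma rat1 p q c d : c <> 0 ->
  is_lim_seq (fun n => (p * INR n + q) / (c * INR n + d)) (p / c).
Proof.
  intros Hc. apply is_lim_seq_incr_1.
  apply is_lim_seq_ext with
    (fun n => (p + q * / INR (S n)) / (c + d * / INR (S n))).
  - intros n. assert (Hx : 0 < INR (S n)) by (apply lt_0_INR; lia).
    rewrite <- (div_scale (INR (S n))) by lra.
    f_equal; field; lra.
  - apply is_lim_seq_div'; [| |exact Hc].
    + assert (Hd : is_lim_seq (fun n => p + q * / INR (S n)) (p + q * 0)).
      { apply is_lim_seq_plus'. apply is_lim_seq_const.
        apply is_lim_seq_mult'. apply is_lim_seq_const. apply lim_invx. }
      replace (p + q * 0) with p in Hd by ring. exact Hd.
    + assert (Hd : is_lim_seq (fun n => c + d * / INR (S n)) (c + d * 0)).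
      { apply is_lim_seq_plus'. apply is_lim_seq_const.
        apply is_lim_seq_mult'. apply is_lim_seq_const. apply lim_invx. }
      replace (c + d * 0) with c in Hd by ring. exact Hd.
Qed.

Lemma A_partial m K : (1 <= m)%nat ->
  (4 * INR m - 2) * rsum (rho m) 1 K = 1 - (yy K + 2 * INR m + 1) * rho m (S K) - Rf m (S K).
Proof.
  intros Hm. induction K.
  - simpl rsum. unfold rho. rewrite Rf_rec, Sf_rec, Rf_n0, Sf_n0.
    pose proof (odd_nz 0 m). pose proof (pos_den 0 m).
    unfold yy in *. simpl INR in *. field. lra.
  - rewrite rsum_last. replace (1 + K)%nat with (S K) by lia.
    rewrite Rmult_plus_distr_l, IHK.
    unfold rho. rewrite (Rf_rec m (S K)), (Sf_rec m (S K)). rewrite yy_S.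
    pose proof (odd_nz (S K) m). pose proof (pos_den (S K) m). rewrite yy_S in *.
    field. lra.
Qed.

Lemma Sf_lim m : is_lim_seq (Sf m) 0.
Proof.
  induction m.
  - apply is_lim_seq_const.
  - simpl Sf. replace (Finite 0) with (Finite (0 + 0)) by (f_equal; ring).
    apply is_lim_seq_plus'. exact IHm.
    eapply is_lim_seq_ext; [|apply (rat2 4 0 (-4) 0 (uu m ^ 2)); lra].
    intros n. unfold yy. unfold Rdiv. f_equal; [ring|f_equal; ring].
Qed.

Lemma Rf_lim m : exists L : R, is_lim_seq (Rf m) L.
Proof.
  induction m.
  - exists 1. apply is_lim_seq_const.
  - destruct IHm as [L HL]. exists (L * 0). simpl Rf. apply is_lim_seq_mult'. exact HL.
    eapply is_lim_seq_ext; [|apply (rat2 0 (uu m ^ 2) (-4) 0 (uu m ^ 2)); lra].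
    intros n. unfold yy. unfold Rdiv. f_equal; [ring|f_equal; ring].
Qed.

Lemma A_lim m : (1 <= m)%nat -> is_lim_seq (fun K => rsum (rho m) 1 K) (/ (4 * INR m - 2)).
Proof.
  intros Hm. destruct m as [|m0]; [lia|].
  assert (Hpos : 0 < 4 * INR (S m0) - 2) by (rewrite S_INR; pose proof (pos_INR m0); lra).
  destruct (Rf_lim m0) as [L HL].
  assert (H1 : is_lim_seq (fun K => Rf (S m0) (S K)) 0).
  { apply (is_lim_seq_incr_1 (Rf (S m0))). replace (Finite 0) with (Finite (L * 0)) by (f_equal; ring).
    simpl Rf. apply is_lim_seq_mult'. exact HL.
    eapply is_lim_seq_ext; [|apply (rat2 0 (uu m0 ^ 2) (-4) 0 (uu m0 ^ 2)); lra].
    intros n. unfold yy. unfold Rdiv. f_equal; [ring|f_equal; ring]. }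
  assert (H2 : is_lim_seq (fun K => (yy K + 2 * INR (S m0) + 1) * Rf (S m0) (S K)) 0).
  { apply is_lim_seq_ext with
      (fun K => Rf m0 (S K) * ((2 * INR K + (2 * INR (S m0) + 1)) * uu m0 ^ 2 /
                 ((-4) * INR K ^ 2 + (-8) * INR K + (uu m0 ^ 2 - 4)))).
    - intros K. cbn [Rf]. unfold yy. rewrite (S_INR K).
      replace (uu m0 ^ 2 - (2 * (INR K + 1)) ^ 2) with ((-4) * INR K ^ 2 + (-8) * INR K + (uu m0 ^ 2 - 4)) by ring.
      unfold Rdiv. ring.
    - replace (Finite 0) with (Finite (L * 0)) by (f_equal; ring).
      apply is_lim_seq_mult'. apply (is_lim_seq_incr_1 (Rf m0)). exact HL.
      eapply is_lim_seq_ext; [|apply (rat2 (2 * uu m0 ^ 2) ((2 * INR (S m0) + 1) * uu m0 ^ 2) (-4) (-8) (uu m0 ^ 2 - 4)); lra].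
      intros n. unfold Rdiv. f_equal. ring. }
  assert (H3 : is_lim_seq (fun K => (yy K + 2 * INR (S m0) + 1) * rho (S m0) (S K)) 0).
  { apply is_lim_seq_ext with (fun K => ((yy K + 2 * INR (S m0) + 1) * Rf (S m0) (S K)) * Sf (S m0) (S K)).
    - intros K. unfold rho. ring.
    - replace (Finite 0) with (Finite (0 * 0)) by (f_equal; ring).
      apply is_lim_seq_mult'. exact H2. apply (is_lim_seq_incr_1 (Sf (S m0))). apply Sf_lim. }
  apply is_lim_seq_ext with
    (fun K => / (4 * INR (S m0) - 2) * (1 - (yy K + 2 * INR (S m0) + 1) * rho (S m0) (S K) - Rf (S m0) (S K))).
  - intros K. rewrite <- A_partial by lia. field. lra.
  - assert (H4 : is_lim_seq (fun K => / (4 * INR (S m0) - 2) * (1 - (yy K + 2 * INR (S m0) + 1) * rho (S m0) (S K) - Rf (S m0) (S K))) (/ (4 * INR (S m0) - 2) * (1 - 0 - 0))).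
    { apply is_lim_seq_mult'. apply is_lim_seq_const.
      apply is_lim_seq_minus'. apply is_lim_seq_minus'. apply is_lim_seq_const. exact H3. exact H1. }
    replace (/ (4 * INR (S m0) - 2) * (1 - 0 - 0)) with (/ (4 * INR (S m0) - 2)) in H4 by ring.
    exact H4.
Qed.

Lemma A_lim' M : is_lim_seq (fun K => rsum (rho (S M)) 1 K) (/ (2 * uu M)).
Proof.
  replace (2 * uu M) with (4 * INR (S M) - 2) by (unfold uu; rewrite S_INR; ring).
  apply A_lim. lia.
Qed.

Definition ct (N n k : nat) : R :=
  (-1) ^ k * (rho N n / yy n ^ (2 * k + 2) - 2 * (INR k + 1) * Rf N n / yy n ^ (2 * k + 3)).

Definition Qf (r N n : nat) : R :=
  rsum (fun k => ee (r - k) N * ct N n k) 0 (S r) + 2 * (-1) ^ r * (INR r + 1) / yy n ^ (2 * r + 3).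

Lemma yy_nz n : (1 <= n)%nat -> yy n <> 0.
Proof. intros H. unfold yy. apply lt_0_INR in H. lra. Qed.

Lemma pow_split y k j : y ^ (2 * k + j) = y ^ (2 * k) * y ^ j.
Proof. apply pow_add. Qed.

Lemma ct_0 N n : (1 <= n)%nat -> ct (S N) n 0 - ct N n 0 = rho (S N) n / uu N ^ 2.
Proof.
  intros Hn. unfold ct, rho. cbn [Rf Sf].
  pose proof (yy_nz n Hn). pose proof (den_nz N n). pose proof (uu_pos N).
  simpl. field. repeat split; lra.
Qed.

Lemma ct_S N n k : (1 <= n)%nat ->
  ct (S N) n (S k) - ct N n (S k) = - (ct (S N) n k / uu N ^ 2).
Proof.
  intros Hn. unfold ct, rho. cbn [Rf Sf].
  pose proof (yy_nz n Hn). pose proof (den_nz N n). pose proof (uu_pos N).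
  replace (2 * S k + 2)%nat with (2 * k + 4)%nat by lia.
  replace (2 * S k + 3)%nat with (2 * k + 5)%nat by lia.
  rewrite !pow_split. rewrite S_INR. change ((-1) ^ (S k)) with (-1 * (-1) ^ k).
  assert (yy n ^ (2 * k) <> 0) by (apply pow_nonzero; auto).
  field. repeat split; lra.
Qed.

Lemma rsum_telesc (G : nat -> R) c : rsum (fun k => G (S k) - G k) 0 c = G c - G 0%nat.
Proof.
  induction c. simpl; ring. rewrite rsum_last, IHc. simpl. ring.
Qed.

Lemma Qf_step r N n : (1 <= n)%nat ->
  Qf r (S N) n - Qf r N n = ee r N * rho (S N) n / uu N ^ 2.
Proof.
  intros Hn. unfold Qf.
  replace (rsum (fun k => ee (r - k) (S N) * ct (S N) n k) 0 (S r) + 2 * (-1) ^ r * (INR r + 1) / yy n ^ (2 * r + 3) -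
   (rsum (fun k => ee (r - k) N * ct N n k) 0 (S r) + 2 * (-1) ^ r * (INR r + 1) / yy n ^ (2 * r + 3)))
   with (rsum (fun k => ee (r - k) (S N) * ct (S N) n k - ee (r - k) N * ct N n k) 0 (S r))
   by (rewrite rsum_minus; ring).
  destruct r as [|r'].
  - cbn [rsum]. change (0 - 0)%nat with 0%nat. rewrite !ee_0. pose proof (ct_0 N n Hn). lra.
  - set (a := / uu N ^ 2).
    set (G := fun j => if (j <=? r')%nat then a * ee (r' - j) N * ct (S N) n j else 0).
    change (rsum (fun k => ee (S r' - k) (S N) * ct (S N) n k - ee (S r' - k) N * ct N n k) 0 (S (S r')))
      with ((ee (S r' - 0) (S N) * ct (S N) n 0 - ee (S r' - 0) N * ct N n 0) +
            rsum (fun k => ee (S r' - k) (S N) * ct (S N) n k - ee (S r' - k) N * ct N n k) 1 (S r')).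
    rewrite rsum_shift.
    rewrite (rsum_ext _ (fun k => G (S k) - G k)).
    + rewrite rsum_telesc. unfold G.
      replace (S r' <=? r')%nat with false by (symmetry; apply Nat.leb_gt; lia).
      replace (0 <=? r')%nat with true by (symmetry; apply Nat.leb_le; lia).
      replace (S r' - 0)%nat with (S r') by lia. replace (r' - 0)%nat with r' by lia.
      rewrite ee_SS. pose proof (ct_0 N n Hn). fold a.
      assert (ct (S N) n 0 = ct N n 0 + rho (S N) n / uu N ^ 2) by lra.
      rewrite H0. unfold a. unfold Rdiv. ring.
    + intros k Hk. simpl in Hk. unfold G.
      pose proof (ct_S N n k Hn) as HS.
      assert (Hc : ct N n (S k) = ct (S N) n (S k) + a * ct (S N) n k) by (unfold a; unfold Rdiv in HS; lra).
      rewrite Hc.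
      replace (S r' - S k)%nat with (r' - k)%nat by lia.
      replace (k <=? r')%nat with true by (symmetry; apply Nat.leb_le; lia).
      destruct (Nat.eq_dec k r') as [->|Hne].
      * replace (S r' <=? r')%nat with false by (symmetry; apply Nat.leb_gt; lia).
        replace (r' - r')%nat with 0%nat by lia. rewrite !ee_0. ring.
      * replace (S k <=? r')%nat with true by (symmetry; apply Nat.leb_le; lia).
        replace (r' - k)%nat with (S (r' - S k)) by lia.
        rewrite ee_SS. fold a. ring.
Qed.

Lemma B_ident r N n : (1 <= n)%nat ->
  rsum (fun M => ee r M * rho (S M) n / uu M ^ 2) 0 N = Qf r N n.
Proof.
  intros Hn. induction N.
  - simpl rsum. unfold Qf. rewrite rsum_last.
    rewrite (rsum_ext _ (fun _ => 0)).
    + rewrite rsum_zero. simpl (0 + r)%nat. replace (r - r)%nat with 0%nat by lia.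
      rewrite ee_0. unfold ct, rho. cbn [Rf Sf].
      pose proof (yy_nz n Hn). assert (yy n ^ (2 * r + 3) <> 0) by (apply pow_nonzero; auto). assert (yy n ^ (2 * r + 2) <> 0) by (apply pow_nonzero; auto).
      field. auto.
    + intros k Hk. replace (r - k)%nat with (S (r - S k)) by lia. rewrite ee_S0. ring.
  - rewrite rsum_last. simpl (0 + N)%nat. rewrite IHN.
    pose proof (Qf_step r N n Hn). lra.
Qed.

Lemma rho_rec m n :
  (yy n + 2 * INR m + 1) * rho m (S n) = (yy n - 2 * INR m + 1) * rho m n + Rf m n - Rf m (S n).
Proof.
  unfold rho. rewrite Rf_rec, Sf_rec.
  pose proof (odd_nz n m). pose proof (pos_den n m). field. lra.
Qed.

Lemma Rf_bound N n : Rabs (Rf N n) <= 1.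
Proof.
  induction n.
  - rewrite Rf_n0, Rabs_R1. lra.
  - rewrite Rf_rec. pose proof (pos_den n N).
    unfold Rdiv. rewrite !Rabs_mult, Rabs_inv, (Rabs_right (yy n + 2 * INR N + 1)) by lra.
    assert (Rabs (yy n - 2 * INR N + 1) <= yy n + 2 * INR N + 1).
    { unfold yy in *. pose proof (pos_INR n); pose proof (pos_INR N). apply Rabs_le; lra. }
    assert (0 <= Rabs (yy n - 2 * INR N + 1) * / (yy n + 2 * INR N + 1) <= 1).
    { split. apply Rmult_le_pos; [apply Rabs_pos|left; apply Rinv_0_lt_compat; lra].
      apply Rmult_le_reg_r with (yy n + 2 * INR N + 1); [lra|].
      rewrite Rmult_assoc, Rinv_l by lra. lra. }
    pose proof (Rabs_pos (Rf N n)). nra.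
Qed.

Lemma rho_bound N n : Rabs (rho N n) <= 1.
Proof.
  destruct N as [|N'].
  - unfold rho. simpl. rewrite Rmult_0_r, Rabs_R0. lra.
  - set (N := S N'). assert (HN : 1 <= INR N) by (unfold N; rewrite S_INR; pose proof (pos_INR N'); lra).
    induction n.
    + unfold rho. rewrite Sf_n0, Rmult_0_r, Rabs_R0. lra.
    + pose proof (rho_rec N n) as H. pose proof (pos_den n N) as P.
      assert (E : rho N (S n) = ((yy n - 2 * INR N + 1) * rho N n + Rf N n - Rf N (S n)) / (yy n + 2 * INR N + 1))
        by (rewrite <- H; field; lra).
      rewrite E. unfold Rdiv. rewrite Rabs_mult, Rabs_inv, (Rabs_right (yy n + 2 * INR N + 1)) by lra.
      apply Rmult_le_reg_r with (yy n + 2 * INR N + 1); [lra|].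
      rewrite Rmult_assoc, Rinv_l by lra. rewrite Rmult_1_r, Rmult_1_l.
      eapply Rle_trans; [apply Rabs_triang|].
      eapply Rle_trans; [apply Rplus_le_compat_l; rewrite Rabs_Ropp; apply Rf_bound|].
      eapply Rle_trans; [apply Rplus_le_compat_r; apply Rabs_triang|].
      rewrite Rabs_mult. pose proof (Rf_bound N n). pose proof (Rabs_pos (rho N n)).
      pose proof (Rabs_pos (yy n - 2 * INR N + 1)).
      assert (Rabs (yy n - 2 * INR N + 1) <= yy n + 2 * INR N + 1 - 2).
      { unfold yy in *. pose proof (pos_INR n). apply Rabs_le; split; lra. }
      nra.
Qed.

Lemma Rf_limN n : is_lim_seq (fun N => Rf N n) ((-1) ^ n).
Proof.
  induction n.
  - simpl. eapply is_lim_seq_ext; [|apply is_lim_seq_const]. intros; rewrite Rf_n0; reflexivity.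
  - eapply is_lim_seq_ext.
    { intros N. symmetry. rewrite Rf_rec. unfold Rdiv. rewrite Rmult_assoc. reflexivity. }
    replace ((-1) ^ S n) with ((-1) ^ n * ((-2) / 2)) by (simpl; field).
    apply is_lim_seq_mult'. exact IHn.
    eapply is_lim_seq_ext; [|apply (rat1 (-2) (yy n + 1) 2 (yy n + 1)); lra].
    intros N. unfold Rdiv. f_equal; [ring|f_equal; ring].
Qed.

Lemma Sf_limN n : is_lim_seq (fun N => Sf N n) 0.
Proof.
  induction n.
  - eapply is_lim_seq_ext; [|apply is_lim_seq_const]. intros; rewrite Sf_n0; reflexivity.
  - eapply is_lim_seq_ext.
    { intros N. symmetry. rewrite Sf_rec. reflexivity. }
    replace (Finite 0) with (Finite (0 + 0)) by (f_equal; ring).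
    apply is_lim_seq_plus'. exact IHn.
    eapply is_lim_seq_ext; [|apply (rat2 4 0 (-4) 0 ((yy n + 1) ^ 2)); lra].
    intros N. unfold Rdiv. f_equal; [ring|f_equal; ring].
Qed.

Lemma rho_limN n : is_lim_seq (fun N => rho N n) 0.
Proof.
  unfold rho. replace (Finite 0) with (Finite ((-1) ^ n * 0)) by (f_equal; ring).
  apply is_lim_seq_mult'. apply Rf_limN. apply Sf_limN.
Qed.

Definition wq (n : nat) : R := / yy n ^ 2.

Lemma wq_nonneg n : 0 <= wq n.
Proof. unfold wq. destruct n. unfold yy; simpl. rewrite Rmult_0_r, Rmult_0_l, Rinv_0. lra.
  apply Rlt_le, Rinv_0_lt_compat, pow_lt. unfold yy. apply Rmult_lt_0_compat; [lra|]. apply lt_0_INR; lia. Qed.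

Lemma wq_ps_bound K : rsum wq 1 K <= 1/2 - 1 / (2 * (INR K + 1)).
Proof.
  induction K.
  - simpl. lra.
  - rewrite rsum_last. replace (1 + K)%nat with (S K) by lia. rewrite S_INR.
    pose proof (pos_INR K).
    assert (wq (S K) <= 1 / (2 * (INR K + 1)) - 1 / (2 * (INR K + 1 + 1))).
    { unfold wq, yy. rewrite S_INR. apply Rle_trans with (/ (2 * (INR K + 1) * (INR K + 2))).
      - apply Rinv_le_contravar. nra. nra.
      - right. field. lra. }
    lra.
Qed.

Lemma wq_lim : exists W : R, is_lim_seq (fun K => rsum wq 1 K) W.
Proof.
  assert (H : ex_finite_lim_seq (fun K => rsum wq 1 K)).
  { apply ex_finite_lim_seq_incr with (M := 1/2).
    - intros K. rewrite rsum_last. pose proof (wq_nonneg (1 + K)). lra.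
    - intros K. pose proof (wq_ps_bound K). pose proof (pos_INR K).
      assert (0 <= 1 / (2 * (INR K + 1))) by (apply Rdiv_le_0_compat; lra). lra. }
  destruct H as [W HW]. exists W. exact HW.
Qed.

Lemma yy_ge1 n : (1 <= n)%nat -> 1 <= yy n.
Proof. intros H. unfold yy. apply le_INR in H. simpl in H. lra. Qed.

Lemma dom_pow (c : R) n j : Rabs c <= 1 -> Rabs (c / yy n ^ (j + 2)) <= wq n.
Proof.
  intros Hc. unfold wq. destruct n.
  - unfold yy. simpl INR. rewrite Rmult_0_r. rewrite pow_i by lia. simpl. rewrite Rmult_0_l.
    unfold Rdiv. rewrite Rinv_0, Rmult_0_r, Rabs_R0. lra.
  - pose proof (yy_ge1 (S n) ltac:(lia)) as Hy.
    assert (H1 : 1 <= yy (S n) ^ j) by (apply pow_R1_Rle; lra).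
    assert (H2 : 0 < yy (S n) ^ 2) by (apply pow_lt; lra).
    assert (HY : yy (S n) ^ 2 <= yy (S n) ^ (j + 2)) by (rewrite pow_add; nra).
    assert (HY0 : 0 < yy (S n) ^ (j + 2)) by lra.
    unfold Rdiv. rewrite Rabs_mult, Rabs_inv, (Rabs_right (yy (S n) ^ (j + 2))) by lra.
    apply Rle_trans with (1 * / yy (S n) ^ (j + 2)).
    + apply Rmult_le_compat_r. left; apply Rinv_0_lt_compat; lra. exact Hc.
    + rewrite Rmult_1_l. apply Rinv_le_contravar; lra.
Qed.

Lemma dom_pow' (c : R) n e : (2 <= e)%nat -> Rabs c <= 1 -> Rabs (c / yy n ^ e) <= wq n.
Proof. intros He Hc. replace e with ((e - 2) + 2)%nat by lia. apply dom_pow; auto. Qed.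

Definition srho k N := ser (fun n => rho N n / yy n ^ (2 * k + 2)).
Definition sRf k N := ser (fun n => Rf N n / yy n ^ (2 * k + 3)).
Definition Zs s := ser (fun n => / yy n ^ s).

Lemma ps_lim_dom (f : nat -> R) : (forall n, Rabs (f n) <= wq n) ->
  is_lim_seq (fun K => rsum f 1 K) (ser f).
Proof. intros H. destruct wq_lim as [W HW]. eapply ser_dom; eauto. Qed.

Lemma srho_lim k N : is_lim_seq (fun K => rsum (fun n => rho N n / yy n ^ (2 * k + 2)) 1 K) (srho k N).
Proof. apply ps_lim_dom. intros n. apply dom_pow'. lia. apply rho_bound. Qed.

Lemma sRf_lim k N : is_lim_seq (fun K => rsum (fun n => Rf N n / yy n ^ (2 * k + 3)) 1 K) (sRf k N).
Proof. apply ps_lim_dom. intros n. apply dom_pow'. lia. apply Rf_bound. Qed.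

Lemma Zs_lim s : (2 <= s)%nat -> is_lim_seq (fun K => rsum (fun n => / yy n ^ s) 1 K) (Zs s).
Proof.
  intros Hs. apply ps_lim_dom. intros n.
  replace (/ yy n ^ s) with (1 / yy n ^ s) by (unfold Rdiv; ring).
  apply dom_pow'. lia. rewrite Rabs_R1; lra.
Qed.

Lemma TT_sum r N : TT r N = rsum (fun M => ee r M / uu M ^ 3) 0 N.
Proof.
  induction N. rewrite TT_0. reflexivity.
  rewrite TT_S, rsum_last, IHN. simpl (0 + N)%nat. unfold Rdiv. ring.
Qed.

Lemma step2 r N : is_lim_seq (fun K => rsum (fun n => 2 * Qf r N n) 1 K) (TT r N).
Proof.
  apply is_lim_seq_ext with
    (fun K => rsum (fun M => (2 * ee r M / uu M ^ 2) * rsum (rho (S M)) 1 K) 0 N).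
  - intros K.
    rewrite (rsum_ext (fun n => 2 * Qf r N n)
               (fun n => rsum (fun M => 2 * (ee r M * rho (S M) n / uu M ^ 2)) 0 N)).
    + rewrite rsum_swap. apply rsum_ext. intros M _.
      rewrite <- rsum_scal. apply rsum_ext. intros n _. unfold Rdiv. ring.
    + intros n Hn. rewrite rsum_scal. rewrite B_ident by lia. reflexivity.
  - rewrite TT_sum.
    replace (rsum (fun M => ee r M / uu M ^ 3) 0 N) with
      (rsum (fun M => (2 * ee r M / uu M ^ 2) * / (2 * uu M)) 0 N).
    + apply lim_rsum. intros M _. apply is_lim_seq_mult'. apply is_lim_seq_const. apply A_lim'.
    + apply rsum_ext. intros M _. pose proof (uu_pos M). field. lra.
Qed.

Definition Vf r N : R :=
  rsum (fun k => ee (r - k) N * ((-1) ^ k * (srho k N - 2 * (INR k + 1) * sRf k N))) 0 (S r)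
  + 2 * (-1) ^ r * (INR r + 1) * Zs (2 * r + 3).

Lemma step3 r N : is_lim_seq (fun K => rsum (Qf r N) 1 K) (Vf r N).
Proof.
  apply is_lim_seq_ext with
    (fun K => rsum (fun k => ee (r - k) N * ((-1) ^ k *
                 (rsum (fun n => rho N n / yy n ^ (2 * k + 2)) 1 K
                  - 2 * (INR k + 1) * rsum (fun n => Rf N n / yy n ^ (2 * k + 3)) 1 K))) 0 (S r)
              + 2 * (-1) ^ r * (INR r + 1) * rsum (fun n => / yy n ^ (2 * r + 3)) 1 K).
  - intros K. unfold Qf. rewrite rsum_plus. f_equal.
    + rewrite rsum_swap. apply rsum_ext. intros k _.
      rewrite <- !rsum_scal. rewrite <- rsum_minus. rewrite <- !rsum_scal.
      apply rsum_ext. intros n _. unfold ct, Rdiv. ring.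
    + rewrite <- rsum_scal. apply rsum_ext. intros n _. unfold Rdiv. ring.
  - unfold Vf. apply is_lim_seq_plus'.
    + apply lim_rsum. intros k _. apply is_lim_seq_mult'. apply is_lim_seq_const.
      apply is_lim_seq_mult'. apply is_lim_seq_const.
      apply is_lim_seq_minus'. apply srho_lim.
      apply is_lim_seq_mult'. apply is_lim_seq_const. apply sRf_lim.
    + apply is_lim_seq_mult'. apply is_lim_seq_const. apply Zs_lim. lia.
Qed.

Lemma TT_V r N : TT r N = 2 * Vf r N.
Proof.
  pose proof (step2 r N) as H2.
  assert (H3 : is_lim_seq (fun K => rsum (fun n => 2 * Qf r N n) 1 K) (2 * Vf r N)).
  { eapply is_lim_seq_ext; [|apply (is_lim_seq_mult' _ _ _ _ (is_lim_seq_const 2) (step3 r N))].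
    intros K. simpl. rewrite rsum_scal. reflexivity. }
  pose proof (is_lim_seq_unique _ _ H2). pose proof (is_lim_seq_unique _ _ H3).
  rewrite H in H0. injection H0. auto.
Qed.

Lemma ser_zero : ser (fun _ => 0) = 0.
Proof.
  unfold ser. apply lim_real_eq. eapply is_lim_seq_ext; [|apply is_lim_seq_const].
  intros K. rewrite rsum_zero. reflexivity.
Qed.

Lemma srho_limN k : is_lim_seq (srho k) 0.
Proof.
  destruct wq_lim as [W HW]. rewrite <- ser_zero. unfold srho.
  apply (dct (fun N n => rho N n / yy n ^ (2 * k + 2)) (fun _ => 0) wq W).
  - intros N n. apply dom_pow'. lia. apply rho_bound.
  - exact HW.
  - intros n. replace (Finite 0) with (Finite (0 * / yy n ^ (2 * k + 2))) by (f_equal; ring).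
    apply is_lim_seq_mult'. apply rho_limN. apply is_lim_seq_const.
Qed.

Definition Aa k := ser (fun n => (-1) ^ n / yy n ^ (2 * k + 3)).

Lemma sRf_limN k : is_lim_seq (sRf k) (Aa k).
Proof.
  destruct wq_lim as [W HW]. unfold sRf, Aa.
  apply (dct (fun N n => Rf N n / yy n ^ (2 * k + 3)) (fun n => (-1) ^ n / yy n ^ (2 * k + 3)) wq W).
  - intros N n. apply dom_pow'. lia. apply Rf_bound.
  - exact HW.
  - intros n. apply is_lim_seq_mult'. apply Rf_limN. apply is_lim_seq_const.
Qed.

Definition Vinf r : R :=
  rsum (fun k => mtv (repeat 2%nat (r - k)) * ((-1) ^ k * (0 - 2 * (INR k + 1) * Aa k))) 0 (S r)
  + 2 * (-1) ^ r * (INR r + 1) * Zs (2 * r + 3).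

Lemma V_lim r : is_lim_seq (Vf r) (Vinf r).
Proof.
  unfold Vf, Vinf. apply is_lim_seq_plus'; [|apply is_lim_seq_const].
  apply lim_rsum. intros k _. apply is_lim_seq_mult'. apply ee_lim.
  apply is_lim_seq_mult'. apply is_lim_seq_const. apply is_lim_seq_minus'. apply srho_limN.
  apply is_lim_seq_mult'. apply is_lim_seq_const. apply sRf_limN.
Qed.

Lemma main_lim r : mtv (repeat 2%nat r ++ 3%nat :: nil) = 2 * Vinf r.
Proof.
  unfold mtv. change (fun N => tpart (repeat 2%nat r ++ 3%nat :: nil) 0 N) with (TT r).
  apply lim_real_eq. eapply is_lim_seq_ext; [intros N; symmetry; apply TT_V|].
  apply is_lim_seq_mult'. apply is_lim_seq_const. apply V_lim.
Qed.

Lemma ps_lim_domc (f : nat -> R) c : (forall n, Rabs (f n) <= c * wq n) ->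
  is_lim_seq (fun K => rsum f 1 K) (ser f).
Proof.
  intros H. destruct wq_lim as [W HW]. apply (ser_dom f (fun n => c * wq n) (c * W) H).
  eapply is_lim_seq_ext; [|apply (is_lim_seq_mult' _ _ _ _ (is_lim_seq_const c) HW)].
  intros K. simpl. rewrite rsum_scal. reflexivity.
Qed.

Lemma inv_pow_dom (c : R) n s : (2 <= s)%nat -> Rabs c <= 1 -> Rabs (c / INR n ^ s) <= 4 * wq n.
Proof.
  intros Hs Hc. unfold wq, yy. destruct n.
  - simpl INR. rewrite pow_i by lia. rewrite Rmult_0_r. simpl. rewrite Rmult_0_l.
    unfold Rdiv. rewrite !Rinv_0, Rmult_0_r, Rabs_R0. lra.
  - assert (Hx : 1 <= INR (S n)) by (rewrite S_INR; pose proof (pos_INR n); lra).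
    set (x := INR (S n)) in *.
    replace (4 * / (2 * x) ^ 2) with (/ x ^ 2) by (field; lra).
    replace s with ((s - 2) + 2)%nat by lia.
    assert (H1 : 1 <= x ^ (s - 2)) by (apply pow_R1_Rle; lra).
    assert (H2 : 0 < x ^ 2) by (apply pow_lt; lra).
    assert (HY : x ^ 2 <= x ^ ((s - 2) + 2)) by (rewrite pow_add; nra).
    unfold Rdiv. rewrite Rabs_mult, Rabs_inv, (Rabs_right (x ^ ((s - 2) + 2))) by lra.
    apply Rle_trans with (1 * / x ^ ((s - 2) + 2)).
    + apply Rmult_le_compat_r. left; apply Rinv_0_lt_compat; lra. exact Hc.
    + rewrite Rmult_1_l. apply Rinv_le_contravar; lra.
Qed.

Lemma zeta_lim s : (2 <= s)%nat -> is_lim_seq (fun K => rsum (fun n => / INR n ^ s) 1 K) (zeta s).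
Proof.
  intros Hs. unfold zeta. fold (ser (fun n => / INR n ^ s)).
  apply (ps_lim_domc _ 4). intros n.
  replace (/ INR n ^ s) with (1 / INR n ^ s) by (unfold Rdiv; ring).
  apply inv_pow_dom. auto. rewrite Rabs_R1; lra.
Qed.

Lemma yy_pow_inv n s : / yy n ^ s = / 2 ^ s * / INR n ^ s.
Proof. unfold yy. rewrite Rpow_mult_distr, Rinv_mult. reflexivity. Qed.

Lemma Zs_val s : (2 <= s)%nat -> Zs s = / 2 ^ s * zeta s.
Proof.
  intros Hs. unfold Zs, ser. apply lim_real_eq.
  eapply is_lim_seq_ext; [|apply (is_lim_seq_mult' _ _ _ _ (is_lim_seq_const (/ 2 ^ s)) (zeta_lim s Hs))].
  intros K. simpl. rewrite <- rsum_scal. apply rsum_ext. intros n _. rewrite yy_pow_inv. reflexivity.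
Qed.

Definition alt s K := rsum (fun n => (-1) ^ n / INR n ^ s) 1 K.
Definition zs s K := rsum (fun n => / INR n ^ s) 1 K.

Lemma alt_even s M : alt s (2 * M) = - zs s (2 * M) + 2 * / 2 ^ s * zs s M.
Proof.
  unfold alt, zs. induction M.
  - simpl. ring.
  - replace (2 * S M)%nat with (S (S (2 * M))) by lia.
    rewrite !rsum_last, IHM.
    replace (1 + 2 * M)%nat with (S (2 * M)) by lia.
    replace (1 + S (2 * M))%nat with (2 * S M)%nat by lia.
    replace (1 + M)%nat with (S M) by lia.
    rewrite pow_1_odd, pow_1_even.
    rewrite mult_INR. replace (INR 2) with 2 by (simpl; ring).
    rewrite Rpow_mult_distr, Rinv_mult. unfold Rdiv. rewrite ?Rinv_mult. ring.
Qed.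

Lemma Aa_val k : Aa k = / 2 ^ (2 * k + 3) * (- zeta (2 * k + 3) + 2 * / 2 ^ (2 * k + 3) * zeta (2 * k + 3)).
Proof.
  set (s := (2 * k + 3)%nat). assert (Hs : (2 <= s)%nat) by (unfold s; lia).
  assert (Halt : is_lim_seq (alt s) (ser (fun n => (-1) ^ n / INR n ^ s))).
  { apply (ps_lim_domc _ 4). intros n. apply inv_pow_dom. auto.
    rewrite pow_1_abs. lra. }
  set (L := ser (fun n => (-1) ^ n / INR n ^ s)) in *.
  assert (Hphi : filterlim (fun M => (2 * M)%nat) eventually eventually).
  { apply eventually_subseq. intros; lia. }
  assert (H1 : is_lim_seq (fun M => alt s (2 * M)) L) by (apply (is_lim_seq_subseq (alt s)); auto).
  assert (H2 : is_lim_seq (fun M => alt s (2 * M)) (- zeta s + 2 * / 2 ^ s * zeta s)).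
  { eapply is_lim_seq_ext; [intros M; symmetry; apply alt_even|].
    apply is_lim_seq_plus'.
    - apply (is_lim_seq_opp (fun M => zs s (2 * M)) (zeta s)).
      apply (is_lim_seq_subseq (zs s)); auto. apply zeta_lim; auto.
    - apply is_lim_seq_mult'. apply is_lim_seq_const. apply zeta_lim; auto. }
  pose proof (is_lim_seq_unique _ _ H1). rewrite (is_lim_seq_unique _ _ H2) in H. injection H as HL.
  unfold Aa, ser. fold s. apply lim_real_eq. rewrite HL.
  eapply is_lim_seq_ext; [|apply (is_lim_seq_mult' _ _ _ _ (is_lim_seq_const (/ 2 ^ s)) Halt)].
  intros K. unfold alt. simpl. rewrite <- rsum_scal. apply rsum_ext. intros n _. unfold Rdiv. rewrite yy_pow_inv. ring.
Qed.

Lemma binom_lt a b : (a < b)%nat -> binom a b = 0%nat.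
Proof.
  revert b; induction a; intros b H; destruct b; try lia; simpl; auto.
  rewrite !IHa by lia. reflexivity.
Qed.

Lemma binom_nn n : binom n n = 1%nat.
Proof. induction n; simpl; auto. rewrite IHn, binom_lt by lia. reflexivity. Qed.

Lemma binom_Sn n : binom (S n) n = S n.
Proof.
  induction n. reflexivity.
  change (binom (S (S n)) (S n)) with (binom (S n) n + binom (S n) (S n))%nat.
  rewrite IHn, binom_nn. lia.
Qed.

Lemma mtv_nil : mtv nil = 1.
Proof. unfold mtv. simpl. rewrite Lim_seq_const. reflexivity. Qed.

Lemma pow2_split k j : (2:R) ^ (2 * k + j) = 2 ^ (2 * k) * 2 ^ j.
Proof. apply pow_add. Qed.

Theorem theorem3p3 (r : nat) :
  mtv (repeat 2%nat r ++ 3%nat :: nil) =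
  rsum (fun k => (-1) ^ (k + 1) * d_r0 r k * / 2 ^ (2 * k) * zeta (2 * k + 1)
                 * mtv (repeat 2%nat (r + 1 - k))) 1 (r + 1).
Proof.
  rewrite main_lim. unfold Vinf. rewrite rsum_shift.
  replace (r + 1)%nat with (S r) by lia.
  rewrite !rsum_last. simpl (0 + r)%nat.
  rewrite !Rmult_plus_distr_l. rewrite <- rsum_scal.
  assert (E1 : rsum (fun k => 2 * (mtv (repeat 2%nat (r - k)) * ((-1) ^ k * (0 - 2 * (INR k + 1) * Aa k)))) 0 r =
    rsum (fun k => (-1) ^ (S k + 1) * d_r0 r (S k) * / 2 ^ (2 * S k) * zeta (2 * S k + 1)
                 * mtv (repeat 2%nat (S r - S k))) 0 r).
  { apply rsum_ext. intros k Hk. simpl in Hk.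
    replace (S r - S k)%nat with (r - k)%nat by lia.
    unfold d_r0. rewrite binom_lt by lia. rewrite Aa_val.
    replace (2 * S k + 1)%nat with (2 * k + 3)%nat by lia.
    replace (2 * S k)%nat with (2 * k + 2)%nat by lia.
    rewrite !pow2_split. rewrite plus_INR, mult_INR. simpl INR.
    rewrite pow_add. replace (S k) with (k + 1)%nat by lia. rewrite pow_add.
    assert (2 ^ (2 * k) <> 0) by (apply pow_nonzero; lra).
    simpl pow. field. auto. }
  rewrite E1.
  replace (r - r)%nat with 0%nat by lia. replace (S r - S r)%nat with 0%nat by lia.
  simpl repeat. rewrite mtv_nil.
  unfold d_r0. replace (2 * S r)%nat with (S (2 * r + 1)) by lia.
  rewrite binom_Sn. rewrite Aa_val, Zs_val by lia.
  replace (2 * S r + 1)%nat with (2 * r + 3)%nat by lia.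
  replace (S (2 * r + 1)) with (2 * r + 2)%nat by lia.
  rewrite !pow2_split. replace (2 * r + 2 + 1)%nat with (2 * r + 3)%nat by lia.
  rewrite (plus_INR (2 * r) 2), mult_INR. simpl INR.
  replace (S r + 1)%nat with (r + 2)%nat by lia. rewrite pow_add.
  assert (2 ^ (2 * r) <> 0) by (apply pow_nonzero; lra).
  simpl pow. field. auto.
Qed.
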